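(* Let $n\geqslant 3$ and let $\alpha_1<\alpha_2<\cdots<\alpha_n$ be real numbers. Let $D$ be the $n\times n$ matrix with $D_{ij}=(\alpha_i-\alpha_j)^2$, and let $D'$ be obtained from $D$ by dividing every entry $D_{ij}$ by the sum $d_j$ of the entries of the $j$th column of $D$. For $k\in\mathbb{Z}/n\mathbb{Z}$ let $u_k\in\mathbb{R}^n$ have $i$th coordinate $(\alpha_i-\alpha_k)(\alpha_i-\alpha_{k+1})$, and let $s_k$ be the sum of the coordinates of $u_k$. Then $\operatorname{rank}(D)=3$, each $u_k$ lies in $\operatorname{col}(D)$, and the polytope $\mathcal{P}_{out}(D')$ is an $n$-gon whose vertices are exactly $v_k=s_k^{-1}u_k$, $k=1,\ldots,n$.
   Context: Indices are taken in $\mathbb{Z}/n\mathbb{Z}$, so that $\alpha_{n+1}=\alpha_1$. $\operatorname{col}(A)$ is the linear span of the columns of $A$; $\Delta_n=\{x\in\mathbb{R}^n: x_1+\cdots+x_n=1,\ x_i\geqslant0\}$; $\mathcal{P}_{out}(A)=\Delta_n\cap\operatorname{col}(A)$. *)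

(* Defs.v *)
From HB Require Import structures.
From mathcomp Require Import all_boot all_order all_algebra.
Set Implicit Arguments. Unset Strict Implicit. Unset Printing Implicit Defensive.
Import Order.TTheory GRing.Theory Num.Theory.
Local Open Scope ring_scope.

Section Defs.
Variable R : realFieldType.
Variable n : nat.

Definition sqdist_mx (a : 'I_n -> R) : 'M[R]_n :=
  \matrix_(i, j) (a i - a j) ^+ 2.

Definition colsum (A : 'M[R]_n) (j : 'I_n) : R := \sum_i A i j.

Definition colnormalize (A : 'M[R]_n) : 'M[R]_n :=
  \matrix_(i, j) (A i j / colsum A j).

Definition in_col (A : 'M[R]_n) (x : 'cV[R]_n) : Prop :=
  exists y : 'cV[R]_n, x = A *m y.

Definition in_simplex (x : 'cV[R]_n) : Prop :=
  (\sum_i x i 0 = 1) /\ (forall i, 0 <= x i 0).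

Definition P_out (A : 'M[R]_n) (x : 'cV[R]_n) : Prop :=
  in_simplex x /\ in_col A x.

Definition uvec (a : 'I_n -> R) (k : 'I_n) : 'cV[R]_n :=
  \col_i ((a i - a k) * (a i - a (ordS k))).

Definition coordsum (x : 'cV[R]_n) : R := \sum_i x i 0.

Definition in_conv (m : nat) (v : 'I_m -> 'cV[R]_n) (x : 'cV[R]_n) : Prop :=
  exists l : 'I_m -> R, (forall k, 0 <= l k) /\ (\sum_k l k = 1) /\
    x = \sum_k l k *: v k.

Definition extreme_point (P : 'cV[R]_n -> Prop) (x : 'cV[R]_n) : Prop :=
  P x /\ forall y z (t : R), P y -> P z -> 0 < t -> t < 1 ->
    x = t *: y + (1 - t) *: z -> y = x /\ z = x.

(* P is an m-gon with vertices exactly v_0,...,v_{m-1}: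
   P is the convex hull of the v_k, the v_k are pairwise distinct,
   the vertices (extreme points) of P are exactly the v_k,
   and P is 2-dimensional (affine span of the v_k has dimension 2). *)
Definition is_polygon_with_vertices (m : nat) (P : 'cV[R]_n -> Prop)
    (v : 'I_m -> 'cV[R]_n) : Prop :=
  (forall x, P x <-> in_conv v x) /\
  injective v /\
  (forall x, extreme_point P x <-> exists k, x = v k) /\
  (forall k0 : 'I_m, \rank (\matrix_(k < m, i < n) (v k i 0 - v k0 i 0)) = 2%N).

End Defs.

(* Main.v *)
Require Import Defs.
From HB Require Import structures.
From mathcomp Require Import all_boot all_order all_algebra.
From mathcomp Require Import ring lra zify.
Import Order.TTheory GRing.Theory Num.Theory.
Local Open Scope ring_scope.
Set Implicit Arguments. Unset Strict Implicit. Unset Printing Implicit Defensive.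

Definition Bf (R : Type) k (A : 'M[R]_k.+1) (i j : nat) := A (inord i) (inord j).
Lemma BfE (R : Type) k (A : 'M[R]_k.+1) (i j : 'I_k.+1) : A i j = Bf A i j.
Proof. by rewrite /Bf !inord_val. Qed.

Lemma det2 (R : comRingType) (A : 'M[R]_2) : \det A = A 0 0 * A 1 1 - A 0 1 * A 1 0.
Proof.
rewrite (expand_det_row _ ord0) !big_ord_recr big_ord0 /cofactor /= !det_mx11 !mxE /=.
rewrite !(BfE A) /=.
rewrite add0r expr0 expr1 !mul1r mulN1r mulrN //.
Qed.

Lemma det3 (R : comRingType) (A : 'M[R]_3) : \det A =
  A 0 0 * (A 1 1 * A 2 2 - A 1 2 * A 2 1)
  - A 0 1 * (A 1 0 * A 2 2 - A 1 2 * A 2 0)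
  + A 0 2 * (A 1 0 * A 2 1 - A 1 1 * A 2 0).
Proof.
rewrite (expand_det_row _ ord0) !big_ord_recr big_ord0 /cofactor /= !det2 !mxE /=.
rewrite !(BfE A) /=.
rewrite add0r expr0 expr1 !mul1r mulN1r mulrN sqrrN expr1n mul1r //.
Qed.

Lemma rank_mxsub (R : fieldType) m n m' n' (f : 'I_m' -> 'I_m) (g : 'I_n' -> 'I_n) (A : 'M[R]_(m,n)) :
  (\rank (mxsub f g A) <= \rank A)%N.
Proof.
have -> : mxsub f g A = rowsub f (colsub g A) by apply/matrixP => i j; rewrite !mxE.
rewrite rowsubE; apply: leq_trans (mxrankM_maxr _ _) _.
have -> : colsub g A = (rowsub g A^T)^T by apply/matrixP => i j; rewrite !mxE.
by rewrite mxrank_tr rowsubE; apply: leq_trans (mxrankM_maxr _ _) _; rewrite mxrank_tr.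
Qed.

Lemma ordS_val n (j : 'I_n) : val (ordS j) = if j.+1 == n then 0%N else j.+1.
Proof.
rewrite /ordS /=; case: eqP => [->|h]; first by rewrite modnn.
by rewrite modn_small //; have := ltn_ord j; lia.
Qed.

Lemma ordS_neq n (j : 'I_n) : (2 <= n)%N -> ordS j != j.
Proof.
move=> hn; apply/eqP => /(congr1 val); rewrite ordS_val; have := ltn_ord j.
case: eqP => /= [h|h]; lia.
Qed.

Lemma ordSS_neq n (j : 'I_n) : (3 <= n)%N -> ordS (ordS j) != j.
Proof.
move=> hn; apply/eqP => /(congr1 val); rewrite !ordS_val; have := ltn_ord j.
case: (eqVneq j.+1 n) => h /=; case: eqP => ? ?; lia.
Qed.

Lemma exists_min (T : finType) (R : realFieldType) (P : pred T) (F : T -> R) i0 :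
  P i0 -> exists2 m, P m & forall j, P j -> F m <= F j.
Proof.
move=> Pi0; case: (arg_minP F Pi0) => m Pm Hm; by exists m.
Qed.

Lemma root3 (R : fieldType) (e0 e1 e2 p r s : R) : p != r -> p != s -> r != s ->
  e0 + e1 * p + e2 * p ^+ 2 = 0 -> e0 + e1 * r + e2 * r ^+ 2 = 0 ->
  e0 + e1 * s + e2 * s ^+ 2 = 0 -> forall t, e0 + e1 * t + e2 * t ^+ 2 = 0.
Proof.
move=> hpr hps hrs hp hr hs.
have h1 : (p - r) * (e1 + e2 * (p + r)) = 0.
  by rewrite -[RHS](subrr 0) -{1}hp -hr; ring.
have h2 : (p - s) * (e1 + e2 * (p + s)) = 0.
  by rewrite -[RHS](subrr 0) -{1}hp -hs; ring.
move/eqP: h1; rewrite mulf_eq0 subr_eq0 (negbTE hpr) /= => /eqP h1.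
move/eqP: h2; rewrite mulf_eq0 subr_eq0 (negbTE hps) /= => /eqP h2.
have h3 : e2 * (r - s) = 0 by rewrite -[RHS](subrr 0) -{1}h1 -h2; ring.
move/eqP: h3; rewrite mulf_eq0 subr_eq0 (negbTE hrs) orbF => /eqP e20.
move: h1; rewrite e20 mul0r addr0 => e10.
subst e1 e2; move=> t; rewrite -[RHS]hp; ring.
Qed.

Lemma pos_sum (R : numDomainType) (T : finType) (f : T -> R) j :
  (forall i, 0 <= f i) -> 0 < f j -> 0 < \sum_i f i.
Proof.
move=> h hj; rewrite (bigD1 j) //=; apply: (lt_le_trans hj).
by rewrite lerDl; apply: sumr_ge0 => i _.
Qed.

Lemma neg_sum (R : numDomainType) (T : finType) (f : T -> R) j :
  (forall i, f i <= 0) -> f j < 0 -> \sum_i f i < 0.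
Proof.
move=> h hj; rewrite (bigD1 j) //=; apply: (le_lt_trans _ hj).
by rewrite gerDl; apply: sumr_le0 => i _.
Qed.

Lemma zero_comb (R : realFieldType) (t p q : R) : 0 <= p -> 0 <= q -> 0 < t -> t < 1 ->
  t * p + (1 - t) * q = 0 -> p = 0 /\ q = 0.
Proof. move=> *; split; nra. Qed.

Section S.
Variable R : realFieldType.
Variable n : nat.
Variable a : 'I_n -> R.
Hypothesis hn : (3 <= n)%N.
Hypothesis ha : forall i j : 'I_n, (i < j)%N -> a i < a j.

Lemma hn2 : (2 <= n)%N. Proof. by apply: leq_trans hn. Qed.

Lemma a_le (i j : 'I_n) : (i <= j)%N -> a i <= a j.
Proof.
rewrite leq_eqVlt => /orP [/eqP h|h]; last exact: ltW (ha h).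
by rewrite (val_inj h).
Qed.

Lemma a_inj (i j : 'I_n) : a i = a j -> i = j.
Proof.
case: (ltngtP i j) => h; first by move: (ha h); rewrite lt_def => /andP [/eqP ? _] /esym.
  by move: (ha h); rewrite lt_def => /andP [/eqP ? _].
by move=> _; apply: val_inj.
Qed.

Lemma a_eq (i j : 'I_n) : (a i == a j) = (i == j).
Proof. by apply/eqP/eqP => [/a_inj|->]. Qed.

Notation D := (sqdist_mx a).
Notation D' := (colnormalize (sqdist_mx a)).

Lemma sq_pos (i j : 'I_n) : i != j -> 0 < (a i - a j) ^+ 2.
Proof.
move=> hij; rewrite lt_def sqr_ge0 andbT sqrf_eq0 subr_eq0 a_eq //.
Qed.

Lemma colsum_pos j : 0 < colsum D j.
Proof.
rewrite /colsum; apply: (@pos_sum _ _ _ (ordS j)) => [i|]; rewrite mxE.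
  exact: sqr_ge0.
by apply: sq_pos; apply: ordS_neq; exact: hn2.
Qed.

Lemma inD_inD' x : in_col D x -> in_col D' x.
Proof.
case=> y ->; exists (\col_j (colsum D j * y j 0)).
apply/matrixP => i k; rewrite !mxE; apply: eq_bigr => j _; rewrite !mxE (ord1 k).
by rewrite (mulrA (_ / _)) divfK //; apply: lt0r_neq0; apply: colsum_pos.
Qed.

Lemma inD'_Q x : in_col D' x ->
  exists c0 c1 c2, forall i, x i 0 = c0 + c1 * a i + c2 * a i ^+ 2.
Proof.
case=> y ->.
exists (\sum_j y j 0 / colsum D j * a j ^+ 2), (\sum_j (-2) * (y j 0 / colsum D j) * a j),
  (\sum_j y j 0 / colsum D j) => i.
rewrite !mxE !mulr_suml -!big_split /=; apply: eq_bigr => j _; rewrite !mxE; ring.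
Qed.

Definition coefQ (c0 c1 c2 : R) (r : 'I_3) : R :=
  if val r == 0%N then c0 else if val r == 1%N then c1 else c2.

Lemma sum_coefQ c0 c1 c2 t : \sum_(r < 3) coefQ c0 c1 c2 r * t ^+ r = c0 + c1 * t + c2 * t ^+ 2.
Proof. rewrite !big_ord_recr big_ord0 /= /coefQ /=; ring. Qed.

Definition Wm : 'M[R]_(3, n) := \matrix_(r < 3, i < n) a i ^+ r.

Lemma Q_row c0 c1 c2 (x : 'cV[R]_n) :
  (forall i, x i 0 = c0 + c1 * a i + c2 * a i ^+ 2) -> (x^T <= Wm)%MS.
Proof.
move=> h; apply/submxP; exists (\row_r coefQ c0 c1 c2 r).
apply/matrixP => i j; rewrite !mxE (ord1 i) h -sum_coefQ; apply: eq_bigr => r _; rewrite !mxE.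
done.
Qed.

Lemma D_le_W : (D <= Wm)%MS.
Proof.
apply/submxP; exists (\matrix_(i < n, r < 3) coefQ (a i ^+ 2) (-2 * a i) 1 r).
apply/matrixP => i j; rewrite !mxE.
under eq_bigr do rewrite !mxE.
rewrite sum_coefQ; ring.
Qed.

Lemma rankD : \rank D = 3%N.
Proof.
apply/eqP; rewrite eqn_leq; apply/andP; split.
  exact: leq_trans (mxrankS D_le_W) (rank_leq_row _).
apply: leq_trans (rank_mxsub (widen_ord hn) (widen_ord hn) D).
rewrite mxrank_unit // unitmxE unitfE det3 !mxE.
set p := a (widen_ord hn 0); set q := a (widen_ord hn 1); set r := a (widen_ord hn 2).
have hpq : p - q != 0 by rewrite subr_eq0 a_eq.
have hpr : p - r != 0 by rewrite subr_eq0 a_eq.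
have hqr : q - r != 0 by rewrite subr_eq0 a_eq.
have -> : (p - p) ^+ 2 * ((q - q) ^+ 2 * (r - r) ^+ 2 - (q - r) ^+ 2 * (r - q) ^+ 2) -
  (p - q) ^+ 2 * ((q - p) ^+ 2 * (r - r) ^+ 2 - (q - r) ^+ 2 * (r - p) ^+ 2) +
  (p - r) ^+ 2 * ((q - p) ^+ 2 * (r - q) ^+ 2 - (q - q) ^+ 2 * (r - p) ^+ 2)
  = 2 * ((p - q) ^+ 2 * (p - r) ^+ 2 * (q - r) ^+ 2) by ring.
by rewrite !mulf_neq0 ?pnatr_eq0 // sqrf_eq0.
Qed.

Lemma Dsym : D^T = D.
Proof. by apply/matrixP => i j; rewrite !mxE -sqrrN opprB. Qed.

Lemma Q_inD (x : 'cV[R]_n) c0 c1 c2 : (forall i, x i 0 = c0 + c1 * a i + c2 * a i ^+ 2) -> in_col D x.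
Proof.
move=> h.
have sWD : (Wm <= D)%MS.
  case: (mxrank_leqif_sup D_le_W) => _ <-.
  by rewrite rankD eqn_leq rank_leq_row /= -{1}rankD (mxrankS D_le_W).
have /submxP [y hy] := submx_trans (Q_row h) sWD.
by exists y^T; rewrite -[x]trmxK hy trmx_mul Dsym.
Qed.


Lemma u_quad (k i : 'I_n) : uvec a k i 0 =
  a k * a (ordS k) + (- (a k + a (ordS k))) * a i + 1 * a i ^+ 2.
Proof. by rewrite mxE; ring. Qed.

Lemma u_zero (k i : 'I_n) : (uvec a k i 0 == 0) = (i == k) || (i == ordS k).
Proof. by rewrite mxE mulf_eq0 !subr_eq0 !a_eq. Qed.

Lemma u_nz (k : 'I_n) : uvec a k (ordS (ordS k)) 0 != 0.
Proof.
rewrite u_zero negb_or (ordSS_neq _ hn) /=.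
by apply: (ordS_neq _ hn2).
Qed.

Lemma u_sign_pos (k : 'I_n) : k.+1 != n -> 0 < coordsum (uvec a k) /\ forall i, 0 <= uvec a k i 0.
Proof.
move=> hk.
have hS : val (ordS k) = k.+1 by rewrite ordS_val (negbTE hk).
have H : forall i, 0 <= uvec a k i 0.
  move=> i; rewrite mxE; case: (leqP i k) => hi.
    apply: mulr_le0; rewrite subr_le0; apply: a_le => //; rewrite hS; lia.
  apply: mulr_ge0; rewrite subr_ge0; apply: a_le => //; rewrite ?hS; lia.
split=> //; apply: (@pos_sum _ _ _ (ordS (ordS k))) => [i|]; first by rewrite H.
by rewrite lt_def u_nz H.
Qed.

Lemma u_sign_neg (k : 'I_n) : k.+1 = n -> coordsum (uvec a k) < 0 /\ forall i, uvec a k i 0 <= 0.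
Proof.
move=> hk.
have hS : val (ordS k) = 0%N by rewrite ordS_val hk eqxx.
have H : forall i, uvec a k i 0 <= 0.
  move=> i; rewrite mxE; apply: mulr_le0_ge0; rewrite ?subr_le0 ?subr_ge0; apply: a_le.
    by have := ltn_ord i; lia.
  by rewrite hS.
split=> //; apply: (@neg_sum _ _ _ (ordS (ordS k))) => [i|]; first by rewrite H.
by rewrite lt_neqAle u_nz H.
Qed.

Lemma s_neq0 (k : 'I_n) : coordsum (uvec a k) != 0.
Proof.
case: (eqVneq k.+1 n) => hk.
  by have [h _] := u_sign_neg hk; rewrite lt_eqF.
by have [h _] := u_sign_pos hk; rewrite gt_eqF.
Qed.

Definition vv (k : 'I_n) : 'cV[R]_n := (coordsum (uvec a k))^-1 *: uvec a k.

Lemma vv_nonneg (k i : 'I_n) : 0 <= vv k i 0.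
Proof.
rewrite mxE; case: (eqVneq k.+1 n) => hk.
  have [h1 h2] := u_sign_neg hk; apply: mulr_le0 => //; rewrite invr_le0; exact: ltW.
have [h1 h2] := u_sign_pos hk; apply: mulr_ge0 => //; rewrite invr_ge0; exact: ltW.
Qed.

Lemma coordsumZ c (x : 'cV[R]_n) : coordsum (c *: x) = c * coordsum x.
Proof. by rewrite /coordsum mulr_sumr; apply: eq_bigr => i _; rewrite mxE. Qed.

Lemma vv_sum (k : 'I_n) : coordsum (vv k) = 1.
Proof. by rewrite coordsumZ mulVf // s_neq0. Qed.

Lemma vv_zero (k i : 'I_n) : (vv k i 0 == 0) = (i == k) || (i == ordS k).
Proof. by rewrite mxE mulf_eq0 invr_eq0 (negbTE (s_neq0 k)) /= u_zero. Qed.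

Lemma vv_quad (k i : 'I_n) : vv k i 0 =
  (coordsum (uvec a k))^-1 * (a k * a (ordS k)) +
  (coordsum (uvec a k))^-1 * (- (a k + a (ordS k))) * a i +
  (coordsum (uvec a k))^-1 * a i ^+ 2.
Proof. by rewrite mxE u_quad; ring. Qed.

Definition P := P_out D'.

Lemma vv_in (k : 'I_n) : P (vv k).
Proof.
split; first by split; [exact: vv_sum | exact: vv_nonneg].
by apply: inD_inD'; apply: Q_inD; apply: vv_quad.
Qed.

Lemma vv_inj : injective vv.
Proof.
move=> k l hkl.
have h1 : vv l k 0 == 0 by rewrite -hkl vv_zero eqxx.
have h2 : vv l (ordS k) 0 == 0 by rewrite -hkl vv_zero eqxx orbT.
rewrite vv_zero in h1; rewrite vv_zero in h2.
case/orP: h1 => /eqP h1 //; subst k.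
case/orP: h2 => /eqP h2.
  by move/eqP: h2; rewrite (negbTE (ordSS_neq _ hn)).
by move/ordS_inj: h2 => h2; move: (ordS_neq l hn2); rewrite h2 eqxx.
Qed.


Definition isQf (f : R -> R) := exists e0 e1 e2 : R, forall t, f t = e0 + e1 * t + e2 * t ^+ 2.

Lemma isQf_B f g : isQf f -> isQf g -> isQf (fun t => f t - g t).
Proof.
case=> [e0 [e1 [e2 hf]]] [d0 [d1 [d2 hg]]]; exists (e0 - d0), (e1 - d1), (e2 - d2) => t.
by rewrite hf hg; ring.
Qed.

Lemma isQf_D f g : isQf f -> isQf g -> isQf (fun t => f t + g t).
Proof.
case=> [e0 [e1 [e2 hf]]] [d0 [d1 [d2 hg]]]; exists (e0 + d0), (e1 + d1), (e2 + d2) => t.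
by rewrite hf hg; ring.
Qed.

Lemma isQf_Z c f : isQf f -> isQf (fun t => c * f t).
Proof.
case=> [e0 [e1 [e2 hf]]]; exists (c * e0), (c * e1), (c * e2) => t.
by rewrite hf; ring.
Qed.

Lemma isQf_U p q : isQf (fun t => (t - p) * (t - q)).
Proof. by exists (p * q), (- (p + q)), 1 => t; ring. Qed.

Lemma isQf_W p q : isQf (fun t => (t - p) * (q - t)).
Proof. by exists (- (p * q)), (p + q), (-1) => t; ring. Qed.

Lemma isQf_C c0 c1 c2 : isQf (fun t => c0 + c1 * t + c2 * t ^+ 2).
Proof. by exists c0, c1, c2. Qed.

Lemma root3f f p q r : isQf f -> p != q -> p != r -> q != r ->
  f p = 0 -> f q = 0 -> f r = 0 -> forall t, f t = 0.
Proof.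
case=> [e0 [e1 [e2 hf]]] hpq hpr hqr hp hq hr t.
rewrite hf; apply: (root3 hpq hpr hqr); by rewrite -hf.
Qed.

Lemma vv_unique (k : 'I_n) y : P y -> y k 0 = 0 -> y (ordS k) 0 = 0 -> y = vv k.
Proof.
case=> [[hs hnn] hc] hy1 hy2; have [c0 [c1 [c2 hq]]] := inD'_Q hc.
set j := ordS (ordS k).
have hu := u_nz k.
set lam := y j 0 / uvec a k j 0.
have E : forall t, (c0 + c1 * t + c2 * t ^+ 2) - lam * ((t - a k) * (t - a (ordS k))) = 0.
  apply: (root3f (p := a k) (q := a (ordS k)) (r := a j)).
  - exact: isQf_B (isQf_C _ _ _) (isQf_Z _ (isQf_U _ _)).
  - by rewrite a_eq eq_sym ordS_neq // hn2.
  - by rewrite a_eq eq_sym ordSS_neq.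
  - by rewrite a_eq eq_sym ordS_neq // hn2.
  - by rewrite -hq hy1 subrr mul0r mulr0 subr0.
  - by rewrite -hq hy2 subrr mulr0 mulr0 subr0.
  - have uj : uvec a k j 0 = (a j - a k) * (a j - a (ordS k)) by rewrite mxE.
    by rewrite -hq -uj /lam divfK // subrr.
have Hy : forall i, y i 0 = lam * uvec a k i 0.
  by move=> i; rewrite hq mxE; apply/eqP; rewrite -subr_eq0 E.
have hl : lam = (coordsum (uvec a k))^-1.
  apply: (mulIf (s_neq0 k)); rewrite mulVf ?s_neq0 // /coordsum mulr_sumr -hs.
  by apply: eq_bigr => i _; rewrite Hy mulrC.
by apply/matrixP => i l; rewrite (ord1 l) Hy hl [RHS]mxE.
Qed.

Lemma vv_extreme (k : 'I_n) : extreme_point P (vv k).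
Proof.
split; first exact: vv_in.
move=> y z t hy hz ht0 ht1 hx.
have Z : forall i, vv k i 0 = 0 -> y i 0 = 0 /\ z i 0 = 0.
  move=> i hi; apply: (@zero_comb _ t) => //.
  - by case: hy => [[_ h] _]; apply: h.
  - by case: hz => [[_ h] _]; apply: h.
  - by rewrite -hi hx !mxE.
have h1 : vv k k 0 = 0 by apply/eqP; rewrite vv_zero eqxx.
have h2 : vv k (ordS k) 0 = 0 by apply/eqP; rewrite vv_zero eqxx orbT.
have [y1 z1] := Z k h1.
have [y2 z2] := Z (ordS k) h2.
by split; apply: vv_unique.
Qed.

Lemma sum_vvE (l : 'I_n -> R) i : (\sum_k l k *: vv k) i 0 = \sum_k l k * vv k i 0.
Proof. by rewrite summxE; apply: eq_bigr => k _; rewrite mxE. Qed.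

Lemma coordsum_conv (l : 'I_n -> R) : coordsum (\sum_k l k *: vv k) = \sum_k l k.
Proof.
rewrite /coordsum; under eq_bigr do rewrite sum_vvE.
rewrite exchange_big /=; apply: eq_bigr => k _.
by rewrite -mulr_sumr; have := vv_sum k; rewrite /coordsum => ->; rewrite mulr1.
Qed.

Lemma conv_P x : in_conv vv x -> P x.
Proof.
case=> l [hl0 [hl1 ->]].
split; first split.
- by rewrite -/(coordsum _) coordsum_conv.
- move=> i; rewrite sum_vvE; apply: sumr_ge0 => k _; apply: mulr_ge0 => //; exact: vv_nonneg.
apply: inD_inD'.
apply: (@Q_inD _ (\sum_k l k * ((coordsum (uvec a k))^-1 * (a k * a (ordS k))))
   (\sum_k l k * ((coordsum (uvec a k))^-1 * (- (a k + a (ordS k)))))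
   (\sum_k l k * (coordsum (uvec a k))^-1)) => i.
rewrite sum_vvE !mulr_suml -!big_split /=; apply: eq_bigr => k _; rewrite vv_quad; ring.
Qed.


Lemma n0 : (0 < n)%N. Proof. by apply: leq_trans hn. Qed.
Lemma nL : (n.-1 < n)%N. Proof. by move: hn; case: n. Qed.
Definition i0 : 'I_n := Ordinal n0.
Definition iL : 'I_n := Ordinal nL.
Definition wf (t : R) := (t - a i0) * (a iL - t).

Lemma sum_ind (j : 'I_n) c (f : 'I_n -> R) : \sum_k (k == j)%:R * c * f k = c * f j.
Proof.
rewrite (bigD1 j) //= eqxx mul1r big1 ?addr0 // => k /negbTE ->.
by rewrite mul0r mul0r.
Qed.

Lemma P_conv x : P x -> in_conv vv x.
Proof.
case=> [[hs hnn] hc]; have [c0 [c1 [c2 hq]]] := inD'_Q hc.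
pose Pint := [pred i : 'I_n | (0 < i < n.-1)%N].
have w_ge0 : forall i : 'I_n, 0 <= wf (a i).
  move=> i; apply: mulr_ge0; rewrite subr_ge0; apply: a_le => //=.
  by have := ltn_ord i; lia.
have w_pos : forall i : 'I_n, Pint i -> 0 < wf (a i).
  move=> i /andP [h1 h2]; apply: mulr_gt0; rewrite subr_gt0; apply: ha => //=.
have w_0 : forall i : 'I_n, ~~ Pint i -> wf (a i) = 0.
  move=> i; rewrite inE negb_and -!leqNgt => /orP [h|h].
    have -> : i = i0 by apply: val_inj => /=; lia.
    by rewrite /wf subrr mul0r.
  have -> : i = iL by apply: val_inj => /=; have := ltn_ord i; lia.
  by rewrite /wf subrr mulr0.
have n1 : (1 < n)%N by apply: leq_trans hn.
have P1 : Pint (Ordinal n1) by rewrite inE /=; lia.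
have [m Pm Hm] := exists_min (fun i => x i 0 / wf (a i)) P1.
have wm := w_pos m Pm.
set mu := x m 0 / wf (a m).
have mu0 : 0 <= mu by apply: divr_ge0 => //; apply: ltW.
have muw : forall j, mu * wf (a j) <= x j 0.
  move=> j; case: (boolP (Pint j)) => hj.
    by rewrite -ler_pdivlMr ?w_pos //; apply: Hm.
  by rewrite w_0 // mulr0.
move: Pm; rewrite inE => /andP [hm1 hm2].
have hmL : (m.-1 < n)%N by apply: leq_ltn_trans (leq_pred _) (ltn_ord m).
have hmR : (m.+1 < n)%N by lia.
pose mL : 'I_n := Ordinal hmL.
pose mR : 'I_n := Ordinal hmR.
have hSL : ordS mL = m by apply: val_inj; rewrite ordS_val /=; case: eqP; lia.
have hSm : ordS m = mR by apply: val_inj; rewrite ordS_val /=; case: eqP; lia.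
have hSI : ordS iL = i0 by apply: val_inj; rewrite ordS_val /=; case: eqP; lia.
have lt1 : a mL < a m by apply: ha => /=; lia.
have lt2 : a m < a mR by apply: ha => /=; lia.
have uLp : 0 < (a mR - a mL) * (a mR - a m) by apply: mulr_gt0; rewrite subr_gt0 //; apply: lt_trans lt2.
have uMp : 0 < (a mL - a m) * (a mL - a mR).
  by rewrite nmulr_rgt0 subr_lt0 //; apply: lt_trans lt2.
set beta := (x mR 0 - mu * wf (a mR)) / ((a mR - a mL) * (a mR - a m)).
set gam := (x mL 0 - mu * wf (a mL)) / ((a mL - a m) * (a mL - a mR)).
have beta0 : 0 <= beta by apply: divr_ge0; [rewrite subr_ge0 | apply: ltW].
have gam0 : 0 <= gam by apply: divr_ge0; [rewrite subr_ge0 | apply: ltW].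
have E : forall t, (c0 + c1 * t + c2 * t ^+ 2) - (beta * ((t - a mL) * (t - a m))
    + gam * ((t - a m) * (t - a mR)) + mu * wf t) = 0.
  apply: (root3f (p := a mL) (q := a m) (r := a mR)).
  - apply: isQf_B (isQf_C _ _ _) _.
    apply: isQf_D; first by apply: isQf_D; apply: isQf_Z; apply: isQf_U.
    by apply: isQf_Z; apply: isQf_W.
  - by rewrite lt_eqF.
  - by rewrite lt_eqF //; apply: lt_trans lt2.
  - by rewrite lt_eqF.
  - rewrite -hq /gam divfK ?gt_eqF //; ring.
  - rewrite -hq /mu divfK ?gt_eqF //; ring.
  - rewrite -hq /beta divfK ?gt_eqF //; ring.
have key : forall i, x i 0 = beta * uvec a mL i 0 + gam * uvec a m i 0 - mu * uvec a iL i 0.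
  move=> i; rewrite hq !mxE hSL hSm hSI; apply/eqP; rewrite -subr_eq0; apply/eqP.
  rewrite -[RHS](E (a i)) /wf; ring.
have hL1 : (mL.+1 != n) by apply/eqP => /=; lia.
have hM1 : (m.+1 != n) by apply/eqP => /=; lia.
have hI1 : (iL.+1 = n) by rewrite /= prednK // n0.
have [sLp _] := u_sign_pos hL1.
have [sMp _] := u_sign_pos hM1.
have [sIn _] := u_sign_neg hI1.
set sL := coordsum (uvec a mL) in sLp *.
set sM := coordsum (uvec a m) in sMp *.
set sI := coordsum (uvec a iL) in sIn *.
pose l := fun k : 'I_n => (k == mL)%:R * (beta * sL) + (k == m)%:R * (gam * sM)
   + (k == iL)%:R * (- (mu * sI)).
have hl0 : forall k, 0 <= l k.
  move=> k; rewrite /l; apply: addr_ge0; first apply: addr_ge0.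
  - by apply: mulr_ge0; [apply: ler0n | apply: mulr_ge0 => //; apply: ltW].
  - by apply: mulr_ge0; [apply: ler0n | apply: mulr_ge0 => //; apply: ltW].
  - apply: mulr_ge0; first exact: ler0n.
    by rewrite oppr_ge0; apply: mulr_ge0_le0 => //; apply: ltW.
have hx : x = \sum_k l k *: vv k.
  apply/matrixP => i j; rewrite (ord1 j) sum_vvE /l.
  under eq_bigr do rewrite !mulrDl.
  rewrite !big_split /= !sum_ind key !mxE.
  rewrite -/sL -/sM -/sI.
  have e : forall c s u : R, s != 0 -> c * s * (s^-1 * u) = c * u.
    by move=> c s0 u hs0; rewrite mulrA mulfK.
  by rewrite mulNr (e _ _ _ (negbT (lt_eqF sIn))) (e _ _ _ (negbT (gt_eqF sLp))) (e _ _ _ (negbT (gt_eqF sMp))).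
exists l; split => //; split => //.
by rewrite -coordsum_conv -hx.
Qed.


Lemma extreme_in_conv x : extreme_point P x -> exists k, x = vv k.
Proof.
case=> hx hext; have [l [hl0 [hl1 hxl]]] := P_conv hx.
have [k hk] : exists k, 0 < l k.
  case: (pickP (fun k => 0 < l k)) => [k hk|H]; first by exists k.
  have : \sum_k l k = 0.
    by apply: big1 => k _; apply/eqP; rewrite eq_le hl0 andbT leNgt H.
  by rewrite hl1 => /eqP; rewrite oner_eq0.
have hsplit : l k + \sum_(j | j != k) l j = 1 by rewrite -hl1 [RHS](bigD1 k).
have hrest : 0 <= \sum_(j | j != k) l j by apply: sumr_ge0.
case: (ltP (l k) 1) => hk1.
  pose l' := fun j : 'I_n => if j == k then 0 else l j / (1 - l k).
  have hk1' : 1 - l k != 0 by rewrite subr_eq0 eq_sym lt_eqF.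
  have hz : P (\sum_j l' j *: vv j).
    apply: conv_P; exists l'; split; last split => //.
      move=> j; rewrite /l'; case: eqP => // _; apply: divr_ge0 => //.
      by rewrite subr_ge0 ltW.
    rewrite (bigD1 k) //= /l' eqxx add0r.
    under eq_bigr => j /negbTE hj do rewrite hj.
    have hr : \sum_(j | j != k) l j = 1 - l k by rewrite -hsplit; ring.
    by rewrite -mulr_suml hr divff.
  have heq : x = l k *: vv k + (1 - l k) *: (\sum_j l' j *: vv j).
    rewrite hxl (bigD1 k) //=; congr (_ + _).
    rewrite scaler_sumr [RHS](bigD1 k) //= /l' eqxx scale0r scaler0 add0r.
    apply: eq_bigr => j /negbTE hj; rewrite hj; set V := vv j; by rewrite [RHS]scalerA [X in _ = X *: V]mulrC divfK.
  have [hv _] := hext (vv k) _ (l k) (vv_in k) hz hk hk1 heq.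
  by exists k; rewrite -hv.
have lk1 : l k = 1.
  by apply/eqP; rewrite eq_le hk1 andbT -hsplit lerDl.
have h0 : \sum_(j | j != k) l j = 0 by move: hsplit; rewrite lk1; lra.
have hz := psumr_eq0P (fun j _ => hl0 j) h0.
exists k; rewrite hxl (bigD1 k) //= lk1 scale1r big1 ?addr0 // => j hj.
by rewrite hz // scale0r.
Qed.


Lemma nR0 : (n%:R : R) != 0.
Proof. by rewrite pnatr_eq0 -lt0n n0. Qed.

Lemma center c0 c1 c2 : \sum_i (c0 + c1 * a i + c2 * a i ^+ 2) = 0 ->
  forall t, c0 + c1 * t + c2 * t ^+ 2 =
   c1 * (t - (\sum_i a i) / n%:R) + c2 * (t ^+ 2 - (\sum_i a i ^+ 2) / n%:R).
Proof.
move=> h t; rewrite !big_split /= sumr_const card_ord -!mulr_sumr -mulr_natr in h.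
have hc0 : c0 = - (c1 * \sum_i a i + c2 * \sum_i a i ^+ 2) / n%:R.
  apply: (mulIf nR0); rewrite divfK ?nR0 //; move: h; lra.
rewrite hc0; ring.
Qed.

Lemma rank_diff (k0 : 'I_n) :
  \rank (\matrix_(k < n, i < n) (vv k i 0 - vv k0 i 0)) = 2%N.
Proof.
set M := \matrix_(k < n, i < n) (vv k i 0 - vv k0 i 0).
apply/eqP; rewrite eqn_leq; apply/andP; split.
  pose c0f := fun k : 'I_n => (coordsum (uvec a k))^-1 * (a k * a (ordS k))
     - (coordsum (uvec a k0))^-1 * (a k0 * a (ordS k0)).
  pose c1f := fun k : 'I_n => (coordsum (uvec a k))^-1 * (- (a k + a (ordS k)))
     - (coordsum (uvec a k0))^-1 * (- (a k0 + a (ordS k0))).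
  pose c2f := fun k : 'I_n => (coordsum (uvec a k))^-1 - (coordsum (uvec a k0))^-1.
  pose C := \matrix_(k < n, r < 2) (if val r == 0%N then c1f k else c2f k).
  pose B := \matrix_(r < 2, i < n) (if val r == 0%N then a i - (\sum_i a i) / n%:R
      else a i ^+ 2 - (\sum_i a i ^+ 2) / n%:R).
  have hM : M = C *m B.
    apply/matrixP => k i.
    have hq : forall j, M k j = c0f k + c1f k * a j + c2f k * a j ^+ 2.
      by move=> j; rewrite mxE !vv_quad /c0f /c1f /c2f; ring.
    have hs : \sum_j (c0f k + c1f k * a j + c2f k * a j ^+ 2) = 0.
      under eq_bigr do rewrite -hq mxE.
      by rewrite sumrB -/(coordsum _) -/(coordsum _) !vv_sum subrr.
    rewrite hq (center hs) !mxE !big_ord_recr big_ord0 /= !mxE /=; ring.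
  rewrite hM; apply: leq_trans (mxrankM_maxr _ _) _; exact: rank_leq_row.
pose f := fun r : 'I_2 => if val r == 0%N then ordS k0 else ord_pred k0.
pose g := fun r : 'I_2 => if val r == 0%N then k0 else ordS k0.
apply: leq_trans (rank_mxsub f g M).
rewrite mxrank_unit // unitmxE unitfE det2 !mxE /f /g /= ord_predK !subrr.
rewrite !(mulr0, mul0r, subr0).
rewrite !mulf_neq0 ?invr_eq0 ?s_neq0 ?subr_eq0 ?a_eq //.
- by rewrite eq_sym ordS_neq // hn2.
- by rewrite eq_sym ordSS_neq.
- apply/eqP => /(congr1 (@ordS n)); rewrite ord_predK; apply/eqP; exact: ordSS_neq.
- by rewrite ordS_neq // hn2.
Qed.


Lemma main_sec : \rank D = 3%N /\ (forall k : 'I_n, in_col D (uvec a k)) /\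
  is_polygon_with_vertices P vv.
Proof.
split; first exact: rankD.
split; first by move=> k; apply: Q_inD; apply: u_quad.
split; first by move=> x; split; [exact: P_conv | exact: conv_P].
split; first exact: vv_inj.
split; last exact: rank_diff.
move=> x; split; first exact: extreme_in_conv.
by case=> k ->; exact: vv_extreme.
Qed.

End S.

Theorem mainTheorem7 (R : realFieldType) (n : nat) (hn : (3 <= n)%N)
    (a : 'I_n -> R) (ha : forall i j : 'I_n, (i < j)%N -> a i < a j) :
  \rank (sqdist_mx a) = 3%N /\
  (forall k : 'I_n, in_col (sqdist_mx a) (uvec a k)) /\
  is_polygon_with_vertices (P_out (colnormalize (sqdist_mx a)))
    (fun k : 'I_n => (coordsum (uvec a k))^-1 *: uvec a k).
Proof. exact: (main_sec hn ha). Qed.
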